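(* Let $n = p^l$ where $p$ is prime and $l$ is a positive integer, and let $G$ be a subgroup of $U(n)$. Then for every $\vec v \in S(n)$, $\lambda(G)$ divides $\#\mathrm{Orb}(G;\vec v)$.
   Context: $U(n)$ is the group (under matrix multiplication) of $2\times 2$ matrices $\begin{bmatrix} a & b \\ 0 & 1\end{bmatrix}$ with $a \in (\mathbb{Z}/n\mathbb{Z})^\times$ and $b \in \mathbb{Z}/n\mathbb{Z}$. $S(n)$ is the set of column vectors $\begin{bmatrix} j \\ 1\end{bmatrix}$ with $j \in \mathbb{Z}/n\mathbb{Z}$, on which $U(n)$ acts by matrix–vector multiplication: $\begin{bmatrix} a & b \\ 0 & 1\end{bmatrix}\begin{bmatrix} j \\ 1\end{bmatrix} = \begin{bmatrix} aj+b \\ 1\end{bmatrix}$. $\mathrm{Orb}(G;\vec v)$ is the orbit of $\vec v$ under $G$, and $\#X$ is the cardinality of $X$. $\lambda(G)$ is the minimum of $\#\mathrm{Orb}(G;\vec v)$ over $\vec v \in S(n)$. *)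

(* Defs.v *)
From mathcomp Require Import all_boot all_order all_algebra all_fingroup.
Set Implicit Arguments. Unset Strict Implicit. Unset Printing Implicit Defensive.
Import GRing.Theory.
Local Open Scope ring_scope.

Definition i0 : 'I_2 := @ord0 1.
Definition i1 : 'I_2 := @ord_max 1.

(* U(n): invertible 2x2 matrices over Z/nZ of the form [a b; 0 1]
   (such a matrix is invertible iff a is a unit, since its determinant is a). *)
Definition Umat (n : nat) : {set {'GL_2['Z_n]}} :=
  [set g : {'GL_2['Z_n]} | (GLval g i1 i0 == 0) && (GLval g i1 i1 == 1)].

Definition Svec (n : nat) : {set 'cV['Z_n]_2} :=
  [set v : 'cV['Z_n]_2 | v i1 ord0 == 1].

Definition Orb (n : nat) (G : {set {'GL_2['Z_n]}}) (v : 'cV['Z_n]_2)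
  : {set 'cV['Z_n]_2} :=
  [set (@GLval 2 _ g *m v) | g in G].

Definition e1 (n : nat) : 'cV['Z_n]_2 := \col_i (if i == i1 then 1 else 0).

Definition lambda (n : nat) (G : {set {'GL_2['Z_n]}}) : nat :=
  #|Orb G [arg min_(v < e1 n in Svec n) #|Orb G v|]|.

(* Main.v *)
Require Import Defs.
From mathcomp Require Import all_boot all_order all_algebra all_fingroup all_solvable.
From mathcomp Require Import ring.
Set Implicit Arguments. Unset Strict Implicit. Unset Printing Implicit Defensive.
Import GRing.Theory.

Section Gen.
Variable R : comRingType.
Open Scope ring_scope.

Lemma pow_cong (q : R) (x c : R) i : x = 1 + q * c -> exists d, x ^+ i = 1 + q * d.
Proof.
move=> ->; elim: i => [|i [d IH]]; first by exists 0; rewrite expr0 mulr0 addr0.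
by exists (d + c + q * d * c); rewrite exprS IH; ring.
Qed.

Lemma geom_cong (q x c : R) m : x = 1 + q * c ->
  exists D, \sum_(i < m) x ^+ i = m%:R + q * D.
Proof.
move=> Hx; elim: m => [|m [D IH]]; first by exists 0; rewrite big_ord0 mulr0 addr0.
have [d Hd] := pow_cong m Hx.
by exists (D + d); rewrite big_ord_recr /= IH Hd -natr1; ring.
Qed.

Lemma step_cong (p k : nat) (x c : R) : x = 1 + (p ^ k.+1)%:R * c ->
  exists d, x ^+ p = 1 + (p ^ k.+2)%:R * d.
Proof.
move=> Hx; have [D HD] := geom_cong p Hx.
have H : x ^+ p - 1 = (x - 1) * \sum_(i < p) x ^+ i by rewrite subrX1.
have Hx1 : x - 1 = (p ^ k.+1)%:R * c by rewrite Hx; ring.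
rewrite HD Hx1 in H.
exists (c * (1 + (p ^ k)%:R * D)).
rewrite -(subrK 1 (x ^+ p)) H !expnS !natrM; ring.
Qed.

Lemma iter_cong (p : nat) (x c : R) m : x = 1 + p%:R * c ->
  exists d, x ^+ (p ^ m) = 1 + (p ^ m.+1)%:R * d.
Proof.
move=> Hx; elim: m => [|m [d IH]]; first by exists c; rewrite expn0 expr1 expn1.
by rewrite expnSr exprM; apply: step_cong IH.
Qed.
End Gen.

Definition gT (n : nat) := matrix_GLtype__canonical__fingroup_FinGroup 2 'Z_n.

Section Mat.
Variable n : nat.
Local Notation Z := ('Z_n).
Local Notation GLT := (FinGroup.sort (gT n)).
Local Open Scope ring_scope.

Lemma ord2 (k : 'I_2) : k = i0 \/ k = i1.
Proof. by case: k => [[|[|k]] Hk]; [left|right|done]; apply: val_inj. Qed.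

Lemma sum2 (F : 'I_2 -> Z) : \sum_(k < 2) F k = F i0 + F i1.
Proof.
rewrite big_ord_recr big_ord_recr big_ord0 /= add0r.
by congr (F _ + F _); apply: val_inj.
Qed.

Definition ga (g : GLT) := GLval g i0 i0.
Definition gb (g : GLT) := GLval g i0 i1.

Lemma UmatP (g : GLT) : g \in Umat n -> GLval g i1 i0 = 0 /\ GLval g i1 i1 = 1.
Proof. by rewrite inE => /andP[/eqP -> /eqP ->]. Qed.

Lemma mulU (g h : GLT) : g \in Umat n -> h \in Umat n ->
  [/\ ga (g * h)%g = ga g * ga h, gb (g * h)%g = ga g * gb h + gb g,
      GLval (g * h)%g i1 i0 = 0 & GLval (g * h)%g i1 i1 = 1].
Proof.
move=> /UmatP [g10 g11] /UmatP [h10 h11].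
rewrite /ga /gb !GL_MxE !mxE !sum2 g10 g11 h10 h11.
split; ring.
Qed.

Lemma mulUU (g h : GLT) : g \in Umat n -> h \in Umat n -> (g * h)%g \in Umat n.
Proof. by move=> Hg Hh; have [_ _ A B] := mulU Hg Hh; rewrite inE A B !eqxx. Qed.

Lemma eqU (g h : GLT) : g \in Umat n -> h \in Umat n -> ga g = ga h -> gb g = gb h -> g = h.
Proof.
move=> /UmatP [g10 g11] /UmatP [h10 h11] Ha Hb; apply: val_inj; apply/matrixP => i j.
by case: (ord2 i) => ->; case: (ord2 j) => ->; rewrite ?g10 ?g11 ?h10 ?h11.
Qed.

Lemma oneU : (1%g : GLT) \in Umat n.
Proof. by rewrite inE GL_1E !mxE /= eqxx. Qed.

Lemma ga1 : ga 1%g = 1. Proof. by rewrite /ga GL_1E mxE. Qed.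
Lemma gb1 : gb 1%g = 0. Proof. by rewrite /gb GL_1E mxE. Qed.

Lemma SvecP (v : 'cV[Z]_2) : v \in Svec n -> v i1 0 = 1.
Proof. by rewrite inE => /eqP. Qed.

Lemma eqS (v w : 'cV[Z]_2) : v \in Svec n -> w \in Svec n -> v i0 0 = w i0 0 -> v = w.
Proof.
move=> /SvecP Hv /SvecP Hw H; apply/matrixP => i j; rewrite [j]ord1.
by case: (ord2 i) => ->; [exact: H | rewrite Hv Hw].
Qed.

Lemma mulS (g : GLT) (v : 'cV[Z]_2) : g \in Umat n -> v \in Svec n ->
  (GLval g *m v) i0 0 = ga g * v i0 0 + gb g /\ (GLval g *m v) i1 0 = 1.
Proof.
move=> /UmatP [g10 g11] /SvecP Hv; rewrite /ga /gb !mxE !sum2 g10 g11 Hv.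
split; ring.
Qed.

Lemma mulSS (g : GLT) (v : 'cV[Z]_2) : g \in Umat n -> v \in Svec n -> GLval g *m v \in Svec n.
Proof. by move=> Hg Hv; rewrite inE (mulS Hg Hv).2. Qed.

Definition actf (v : 'cV[Z]_2) (g : GLT) := GLval (g^-1)%g *m v.

Lemma actf1 : actf^~ 1%g =1 id.
Proof. by move=> v; rewrite /actf invg1 GL_1E mul1mx. Qed.

Lemma actfM v : act_morph actf v.
Proof. by move=> g h; rewrite /actf invMg GL_MxE mulmxA. Qed.

Definition mto := TotalAction actf1 actfM.

End Mat.

Section Grp.
Variable n : nat.
Local Notation Z := ('Z_n).
Local Notation GLT := (FinGroup.sort (gT n)).
Variable G : {group GLT}.
Hypothesis HG : G \subset Umat n.
Local Open Scope ring_scope.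

Lemma inG g : g \in G -> g \in Umat n.
Proof. exact: (subsetP HG). Qed.

Lemma gaV g : g \in G -> (ga g * ga (g^-1)%g = 1)%R.
Proof.
move=> Hg; have Hgi : (g^-1)%g \in G := groupVr Hg.
have [A _ _ _] := mulU (inG Hg) (inG Hgi).
by rewrite -A mulgV ga1.
Qed.

Lemma ga_unit g : g \in G -> ga g \is a GRing.unit.
Proof.
move=> Hg; apply/unitrP; exists (ga (g^-1)%g); split; last exact: gaV.
by rewrite mulrC gaV.
Qed.

Lemma actfE v g : g \in G -> (actf v g = v <-> GLval g *m v = v).
Proof.
move=> Hg; rewrite /actf; split=> H.
  by rewrite -{1}H mulmxA -GL_MxE mulgV GL_1E mul1mx.
by rewrite -{1}H mulmxA -GL_MxE mulVg GL_1E mul1mx.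
Qed.

Lemma stabP v g : v \in Svec n ->
  (g \in ('C_G[v | mto n])%g) = (g \in G) && (ga g * v i0 0 + gb g == v i0 0)%R.
Proof.
move=> Hv; apply/idP/idP.
  case/setIP => Hg /astab1P /= /(actfE v Hg) H.
  by rewrite Hg /= -(mulS (inG Hg) Hv).1 H.
case/andP => Hg /eqP H; rewrite inE Hg /=; apply/astab1P => /=.
apply/(actfE v Hg); apply: eqS => //; first exact: mulSS (inG Hg) Hv.
by rewrite (mulS (inG Hg) Hv).1.
Qed.

Lemma orbitE v : orbit (mto n) G v = Orb G v.
Proof.
apply/setP => w; apply/imsetP/imsetP => [[g Hg ->]|[g Hg ->]].
  by exists (g^-1)%g; [exact: groupVr Hg|].
by exists (g^-1)%g; [exact: groupVr Hg| rewrite /= /actf invgK].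
Qed.

Lemma orbit_stab v : (#|Orb G v| * #|('C_G[v | mto n])%g| = #|G|)%N.
Proof. by rewrite -orbitE card_orbit_stab. Qed.

Lemma stab_inj v g h : v \in Svec n -> g \in ('C_G[v | mto n])%g -> h \in ('C_G[v | mto n])%g ->
  ga g = ga h -> g = h.
Proof.
move=> Hv; rewrite !stabP // => /andP[Hg /eqP Eg] /andP[Hh /eqP Eh] E.
refine (eqU (inG Hg) (inG Hh) E _).
by apply: (@addrI _ (ga g * v i0 0)%R); rewrite Eg E Eh.
Qed.
Lemma gaX g m : g \in G -> ga (g ^+ m)%g = ga g ^+ m.
Proof.
move=> Hg; elim: m => [|m IH]; first by rewrite expg0 ga1 expr0.
have Hm : (g ^+ m)%g \in G := groupX m Hg.
by have [A _ _ _] := mulU (inG Hg) (inG Hm); rewrite expgS A IH exprS.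
Qed.

Lemma gbX g m : g \in G -> ga g = 1 -> gb (g ^+ m)%g = m%:R * gb g.
Proof.
move=> Hg H1; elim: m => [|m IH]; first by rewrite expg0 gb1 mul0r.
have Hm : (g ^+ m)%g \in G := groupX m Hg.
have [_ B _ _] := mulU (inG Hg) (inG Hm); rewrite expgS B IH H1 -natr1; ring.
Qed.
End Grp.
Section Case1.
Variables (p l : nat).
Hypothesis (pp : prime p) (l0 : (0 < l)%N).
Local Notation Z := ('Z_(p ^ l)).
Local Open Scope ring_scope.

Lemma n_gt1 : (1 < p ^ l)%N.
Proof. by rewrite -(expn0 p) ltn_exp2l // prime_gt1. Qed.

Lemma char0 : ((p ^ l)%:R : Z) = 0.
Proof. by apply: val_inj; rewrite /= Zp_nat /= Zp_cast ?n_gt1 // modnn. Qed.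

Lemma notunit_cong (x : Z) : ~~ ((x - 1) \is a GRing.unit) -> exists c, x = 1 + p%:R * c.
Proof.
move=> H; exists (((val (x - 1)%R) %/ p)%:R).
have Hy : (p %| val (x - 1)%R)%N.
  move: H; rewrite -{1}(natr_Zp (x - 1)%R) unitZpE ?n_gt1 // coprime_pexpl //.
  by rewrite prime_coprime // negbK.
by rewrite -natrM mulnC divnK // natr_Zp addrC subrK.
Qed.

Lemma pow_one (x : Z) : ~~ ((x - 1) \is a GRing.unit) -> x ^+ (p ^ l) = 1.
Proof.
move=> /notunit_cong [c Hc]; have [d ->] := iter_cong l Hc.
by rewrite expnS natrM char0 mulr0 mul0r addr0. Qed.
End Case1.

Section Main.
Variables (p l : nat).
Hypothesis (pp : prime p) (l0 : (0 < l)%N).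
Local Notation n := (p ^ l)%N.
Local Notation Z := ('Z_n).
Local Notation GLT := (FinGroup.sort (gT n)).
Variable G : {group GLT}.
Hypothesis HG : G \subset Umat n.
Local Open Scope ring_scope.

Lemma case1 (H1 : forall g, g \in G -> ~~ ((ga g - 1) \is a GRing.unit)) v :
  v \in Svec n -> exists k, #|('C_G[v | mto n])%G| = (p ^ k)%N.
Proof.
move=> Hv.
have Hord : forall h, h \in ('C_G[v | mto n])%G -> (h ^+ n)%g = 1%g.
  move=> h Hh; have Hh' := Hh; rewrite stabP // in Hh'; case/andP: Hh' => HhG _.
  apply: (stab_inj HG Hv); [exact: groupX _ Hh | exact: group1 | ].
  by rewrite (gaX HG) // ga1 pow_one // H1.
have : p.-nat #|('C_G[v | mto n])%G|.
  apply/pnatP; first exact: cardG_gt0.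
  move=> q pq qd; have [x Hx ox] := Cauchy pq qd.
  have := Hord x Hx; move/eqP; rewrite -order_dvdn ox Euclid_dvdX // l0 andbT.
  by rewrite dvdn_prime2.
by case/p_natP => k Hk; exists k.
Qed.

Section Case2.
Variable g : GLT.
Hypothesis Hg : g \in G.
Hypothesis Hu1 : (ga g - 1) \is a GRing.unit.
Let a := ga g.
Let b := gb g.
Let u := (ga g - 1)^-1.
Let j0 := - u * b.
Definition x0 : 'cV[Z]_2 := \col_i (if i == i1 then 1 else j0).
Let m := val (- u).
Definition comm (h : GLT) := (g * h * g^-1 * h^-1)%g.
Definition phi (h : GLT) := ((comm h) ^+ m * h)%g.

Lemma Hu : u * (a - 1) = 1.
Proof. exact: mulVr. Qed.

Lemma x0S : x0 \in Svec n.
Proof. by rewrite inE mxE eqxx. Qed.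

Lemma x0E : x0 i0 0 = j0.
Proof. by rewrite mxE. Qed.

Lemma commG h : h \in G -> comm h \in G.
Proof. by move=> Hh; exact: groupM (groupM (groupM Hg Hh) (groupVr Hg)) (groupVr Hh). Qed.

Lemma commE h : h \in G ->
  ga (comm h) = 1 /\ gb (comm h) = a * gb h + b - ga h * b - gb h.
Proof.
move=> Hh; have Hc := commG Hh.
have E : (comm h * h * g = g * h)%g by rewrite /comm mulgKV mulgKV.
have Hch : (comm h * h)%g \in G := groupM Hc Hh.
have [A1 B1 _ _] := mulU (inG HG Hch) (inG HG Hg).
have [A2 B2 _ _] := mulU (inG HG Hc) (inG HG Hh).
have [A3 B3 _ _] := mulU (inG HG Hg) (inG HG Hh).
have Ea : ga (comm h) = 1.
  have Hun : (ga h * a) \is a GRing.unit by rewrite unitrM !(ga_unit HG).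
  apply: (mulIr Hun); rewrite mul1r mulrA -A2 -A1 E A3 mulrC.
  done.
split => //.
have := f_equal (@gb _) E; rewrite B1 A2 B2 B3 Ea mul1r => H.
rewrite -H /a /b; ring.
Qed.

Lemma phiG h : h \in G -> phi h \in G.
Proof. by move=> Hh; exact: groupM (groupX m (commG Hh)) Hh. Qed.

Lemma phiE h : h \in G -> ga (phi h) = ga h /\ gb (phi h) = gb h - u * (a * gb h + b - ga h * b - gb h).
Proof.
move=> Hh; have Hc := commG Hh; have [Ea Eb] := commE Hh.
have Hcm : (comm h ^+ m)%g \in G := groupX m Hc.
have [A B _ _] := mulU (inG HG Hcm) (inG HG Hh).
rewrite /phi A B (gaX HG) // (gbX HG) // Ea expr1n mul1r Eb /m natr_Zp; split => //.
ring.
Qed.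

Lemma phiS h : h \in G -> phi h \in ('C_G[x0 | mto n])%G.
Proof.
move=> Hh; rewrite stabP ?x0S // phiG //= x0E.
have [A B] := phiE Hh; rewrite A B /j0.
have -> : ga h * (- u * b) + (gb h - u * (a * gb h + b - ga h * b - gb h)) =
   - u * b + gb h * (1 - u * (a - 1)) by ring.
by rewrite Hu subrr mulr0 addr0.
Qed.

Lemma phiM : {in G &, {morph phi : x y / (x * y)%g}}.
Proof.
move=> h1 h2 H1 H2.
apply: (stab_inj HG x0S); [exact: phiS (groupM H1 H2) | exact: groupM (phiS H1) (phiS H2) |].
have [A1 _ _ _] := mulU (inG HG H1) (inG HG H2).
have [A2 _ _ _] := mulU (inG HG (phiG H1)) (inG HG (phiG H2)).
by rewrite A2 (phiE (groupM H1 H2)).1 A1 (phiE H1).1 (phiE H2).1.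
Qed.

Lemma case2 v : v \in Svec n ->
  (#|('C_G[v | mto n])%G| %| #|('C_G[x0 | mto n])%G|)%N.
Proof.
move=> Hv; pose f := Morphism phiM.
have HS : ('C_G[v | mto n])%G \subset G by apply: subsetIl.
have -> : #|('C_G[v | mto n])%G| = #|(f @* ('C_G[v | mto n]))%G|.
  rewrite /= morphimE (setIidPr HS) card_in_imset //.
  move=> h1 h2 H1 H2 /= E; apply: (stab_inj HG Hv H1 H2).
  have G1 : h1 \in G by apply: (subsetP HS).
  have G2 : h2 \in G by apply: (subsetP HS).
  by rewrite -(phiE G1).1 -(phiE G2).1 E.
apply: cardSg; apply/subsetP => y /morphimP [h hD _ ->] /=.
exact: phiS.
Qed.
End Case2.
End Main.

Theorem lemma2p3 (p l : nat) (G : {group {'GL_2['Z_(p ^ l)]}}) :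
  prime p -> (0 < l)%N -> G \subset Umat (p ^ l) ->
  forall v, v \in Svec (p ^ l) -> (lambda G %| #|Orb G v|)%N.
Proof.
move=> pp l0 HG v Hv.
have He1 : e1 (p ^ l) \in Svec (p ^ l) by rewrite inE mxE eqxx.
rewrite /lambda; case: arg_minnP => // w Hw Hmin.
set S := fun x => #|('C_G[x | mto (p ^ l)])%G|.
have OS : forall x, (#|Orb G x| * S x = #|G|)%N by move=> x; exact: orbit_stab.
have Gpos := cardG_gt0 G.
have Smax : forall x, x \in Svec (p ^ l) -> (S x <= S w)%N.
  move=> x Hx; have := Hmin x Hx; have := OS x; have := OS w.
  have : (0 < #|Orb G x|)%N.
    by rewrite lt0n; apply/eqP => E; move: (OS x); rewrite E mul0n => E'; rewrite -E' in Gpos.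
  move=> Ox Ew Ex Hle.
  rewrite -(leq_pmul2l Ox) Ex -Ew.
  by rewrite leq_mul2r Hle orbT.
suff Hd : (S v %| S w)%N.
  rewrite -(@dvdn_pmul2r (S v)) ?cardG_gt0 // OS -(OS w).
  by rewrite dvdn_mul.
case: (boolP [exists g in G, ga g - 1 \is a GRing.unit]%R).
  case/existsP => g /andP [Hg Hu].
  have H1 := case2 HG Hg Hu Hv.
  have H2 := case2 HG Hg Hu Hw.
  have H3 := Smax _ (x0S g).
  have E : S w = S (x0 g) by apply/eqP; rewrite eqn_leq H3 dvdn_leq ?cardG_gt0.
  by rewrite E.
move/existsPn => H1.
have H1' : forall g, g \in G -> ~~ (ga g - 1 \is a GRing.unit)%R.
  by move=> g Hg; have := H1 g; rewrite Hg.
have [i Hi] := case1 pp l0 HG H1' Hv.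
have [k Hk] := case1 pp l0 HG H1' Hw.
have := Smax v Hv; rewrite /S Hi Hk => Hle.
by apply: dvdn_exp2l; rewrite -(leq_exp2l _ _ (prime_gt1 pp)).
Qed.
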